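(* Let $u=\sum_{i,j=1}^4 q_{i,j}\,e_i\otimes e_j$ be a positive element of $\mathcal V\otimes_{\max}\mathcal V$. For $a,c\in\{0,2\}$ and $j,k\in\{1,2\}$ set $S_{a,c}(j,k)=\min_{b\in\{0,2\}}\sum_{i=1}^2\sqrt{q_{b+i,a+j}}\sqrt{q_{b+i,c+k}}$. Then for each $d\in\{0,2\}$, $\sum_{i,j=1}^2 q_{d+i,d+j}\le\min_{a,c\in\{0,2\}}\sum_{j,k=1}^2 S_{a,c}(j,k)$.
   Context: $e_1,\dots,e_4$ is the standard basis of $\ell^\infty_4$, and $\mathcal V=\{(a,b,c,d)\in\ell^\infty_4: a+b=c+d\}$ is an operator subsystem of $\ell^\infty_4$; elements of $\mathcal V\otimes\mathcal V\subseteq\ell^\infty_4\otimes\ell^\infty_4$ are written uniquely as $\sum q_{i,j}e_i\otimes e_j$ (positive elements have $q_{i,j}\ge0$). $\otimes_{\max}$ is the maximal operator system tensor product, whose cones are the Archimedeanization of $\{A^*(P\otimes Q)A: P\in M_k(\mathcal V)_+, Q\in M_m(\mathcal V)_+, A \text{ scalar}\}$. *)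

(* Defs.v *)
(* Scalars: an arbitrary numClosedFieldType C (algebraically
   closed field with conjugation and partial order, e.g. the complex numbers). *)
From HB Require Import structures.
From mathcomp Require Import all_boot all_order all_algebra.
Set Implicit Arguments. Unset Strict Implicit. Unset Printing Implicit Defensive.
Import Order.TTheory GRing.Theory Num.Theory.
Local Open Scope ring_scope.

Definition adjmx (C : numClosedFieldType) (m n : nat) (M : 'M[C]_(m, n)) : 'M[C]_(n, m) :=
  (map_mx Num.conj M)^T.

Definition psdmx (C : numClosedFieldType) (k : nat) (M : 'M[C]_k) : Prop :=
  adjmx M = M /\ forall x : 'cV[C]_k, 0 <= (adjmx x *m M *m x) 0 0.

(* An element of M_k(l^oo_4) is a 4-tuple P (P i = coefficient of e_i) of
   k x k matrices; it is positive iff each P i is psd.  It lies in M_k(V)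
   iff P 0 + P 1 = P 2 + P 3 (i.e. a+b=c+d with 0-based indices). *)
Definition MkV_pos (C : numClosedFieldType) (k : nat) (P : 'I_4 -> 'M[C]_k) : Prop :=
  (forall i, psdmx (P i)) /\ P 0 + P 1 = P 2 + P 3.

(* The set { A^* (P (x) Q) A : P in M_k(V)_+, Q in M_m(V)_+, A in M_{km,1} }
   at matrix level 1.  The column vector A in C^{km} is indexed by pairs
   (r,s) in 'I_k * 'I_m, so it is stored as A : 'M_(k,m); the (i,j)
   coefficient (on e_i (x) e_j) of A^*(P (x) Q)A is A^*(P_i (x) Q_j)A, written
   out with the Kronecker product unfolded. *)
Definition Dmax1 (C : numClosedFieldType) (q : 'M[C]_4) : Prop :=
  exists (k m : nat) (P : 'I_4 -> 'M[C]_k) (Q : 'I_4 -> 'M[C]_m) (A : 'M[C]_(k, m)),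
    MkV_pos P /\ MkV_pos Q /\
    forall i j : 'I_4,
      q i j = \sum_(r < k) \sum_(r' < k) \sum_(s < m) \sum_(s' < m)
                (A r s)^* * (P i r r' * Q j s s') * A r' s'.

(* u = sum q_{ij} e_i (x) e_j is positive in V (x)_max V: Archimedeanization,
   i.e. u + eps (1 (x) 1) lies in the cone above for every eps > 0
   (1 (x) 1 = sum_{i,j} e_i (x) e_j). *)
Definition maxpos (C : numClosedFieldType) (q : 'M[C]_4) : Prop :=
  forall eps : C, 0 < eps -> Dmax1 (q + const_mx eps).

(* block offsets: b = false <-> 0, b = true <-> 2; ix b i = b + i (0-based) *)
Definition ix (b : bool) (i : 'I_2) : 'I_4 := inord ((if b then 2 else 0) + i).

Definition Sac (C : numClosedFieldType) (q : 'M[C]_4) (a c : bool) (j k : 'I_2) : C :=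
  let f b := \sum_(i < 2) sqrtC (q (ix b i) (ix a j)) * sqrtC (q (ix b i) (ix c k)) in
  Num.min (f false) (f true).

(* Main.v *)
Require Import Defs.
From HB Require Import structures.
From mathcomp Require Import all_boot all_order all_algebra.
From mathcomp Require Import sesquilinear spectral.
Set Implicit Arguments. Unset Strict Implicit. Unset Printing Implicit Defensive.
Import Order.TTheory GRing.Theory Num.Theory.
Local Open Scope ring_scope.

Section Adj.
Variable C : numClosedFieldType.

Lemma adjmxM m n p (A : 'M[C]_(m, n)) (B : 'M[C]_(n, p)) :
  adjmx (A *m B) = adjmx B *m adjmx A.
Proof. by rewrite /adjmx map_mxM trmx_mul. Qed.
Lemma adjmxK m n (A : 'M[C]_(m, n)) : adjmx (adjmx A) = A.
Proof. by apply/matrixP=> i j; rewrite !mxE conjCK. Qed.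
Lemma adjmxD m n (A B : 'M[C]_(m, n)) : adjmx (A + B) = adjmx A + adjmx B.
Proof. by apply/matrixP=> i j; rewrite !mxE rmorphD. Qed.
Lemma adjmxN m n (A : 'M[C]_(m, n)) : adjmx (- A) = - adjmx A.
Proof. by apply/matrixP=> i j; rewrite !mxE rmorphN. Qed.
Lemma adjmxB m n (A B : 'M[C]_(m, n)) : adjmx (A - B) = adjmx A - adjmx B.
Proof. by rewrite adjmxD adjmxN. Qed.
Lemma adjmxZ m n a (A : 'M[C]_(m, n)) : adjmx (a *: A) = a^* *: adjmx A.
Proof. by apply/matrixP=> i j; rewrite !mxE rmorphM. Qed.
Lemma adjmx_scalar n a : adjmx (a%:M : 'M[C]_n) = a^*%:M.
Proof. by apply/matrixP=> i j; rewrite !mxE eq_sym; case: (i == j); rewrite ?mulr1n ?mulr0n ?rmorph0. Qed.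
Lemma adjmx1 n : adjmx (1%:M : 'M[C]_n) = 1%:M.
Proof. by rewrite adjmx_scalar rmorph1. Qed.
Lemma adjmx_diag n (l : 'rV[C]_n) : adjmx (diag_mx l) = diag_mx (map_mx Num.conj l).
Proof. apply/matrixP=> i j; rewrite !mxE rmorphMn eq_sym; have [->|_] := eqVneq i j; by rewrite ?mulr0n ?mxE. Qed.
Lemma adjmx_tr n (M : 'M[C]_n) : \tr (adjmx M) = (\tr M)^*.
Proof. by rewrite /adjmx mxtrace_tr /mxtrace rmorph_sum; apply: eq_bigr => i _; rewrite mxE. Qed.
Lemma adjmx_t m n (M : 'M[C]_(m,n)) : adjmx M = map_mx Num.conj (M^T).
Proof. by rewrite /adjmx map_trmx. Qed.
End Adj.

Section Spec.
Variable C : numClosedFieldType.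

Lemma mulmx_entry m n p (A : 'M[C]_(m, n)) (B : 'M[C]_(n, p)) i j :
  (A *m B) i j = (row i A *m col j B) 0 0.
Proof. by rewrite !mxE; apply: eq_bigr => k _; rewrite !mxE. Qed.

Lemma herm_of_adj n (M : 'M[C]_n) : adjmx M = M -> M \is hermsymmx.
Proof.
move=> hM; apply/is_hermitianmxP; rewrite expr0 scale1r.
by rewrite -[LHS]hM /adjmx map_trmx.
Qed.

Lemma herm_spec n (M : 'M[C]_n) : adjmx M = M ->
  exists V : 'M[C]_n, exists l : 'rV[C]_n,
    [/\ adjmx V *m V = 1%:M, V *m adjmx V = 1%:M & M = adjmx V *m diag_mx l *m V].
Proof.
move=> hM.
have hN : M \is normalmx by apply: hermitian_normalmx; exact: herm_of_adj.
have /orthomx_spectralP E := hN.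
set P := spectralmx M in E; set sp := spectral_diag M in E.
have Pu : P \is unitarymx by exact: spectral_unitarymx.
have iP : invmx P = adjmx P by rewrite invmx_unitary // /adjmx map_trmx.
exists P, sp; split.
- by rewrite -iP mulVmx // unitarymx_unit.
- by rewrite -iP mulmxV // unitarymx_unit.
- by rewrite -iP.
Qed.

End Spec.

Section Factor.
Variable C : numClosedFieldType.


Lemma psd_factor n (M : 'M[C]_n) : psdmx M -> exists Y : 'M[C]_n, adjmx Y *m Y = M.
Proof.
move=> [hM hpos]; have [V [l [h1 h2 E]]] := herm_spec hM.
have hl : forall i, 0 <= l 0 i.
  move=> i; have := hpos (col i (adjmx V)).
  suff -> : (adjmx (col i (adjmx V)) *m M *m col i (adjmx V)) 0 0 = l 0 i by [].
  have -> : adjmx (col i (adjmx V)) = row i V.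
    by apply/matrixP=> a b; rewrite !mxE conjCK.
  rewrite -row_mul -mulmx_entry E !mulmxA h2 mul1mx -mulmxA h2 mulmx1.
  by rewrite mxE eqxx mulr1n.
exists (diag_mx (map_mx sqrtC l) *m V).
rewrite adjmxM adjmx_diag E -!mulmxA; congr (_ *m _); rewrite !mulmxA; congr (_ *m _).
apply/matrixP=> i j; rewrite mul_diag_mx !mxE.
have [->|ne] := eqVneq i j; last by rewrite !mulr0n mulr0.
rewrite !mulr1n.

have /CrealP -> := sqrtC_real (hl j).
by rewrite -expr2 sqrtCK.
Qed.
End Factor.

From mathcomp Require Import ring.
Section CS.
Variable C : numClosedFieldType.
Variable V : lmodType C.
Variable f : V -> V -> C.
Hypothesis flin : forall x y z a, f x (a *: y + z) = a * f x y + f x z.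
Hypothesis fsym : forall x y, f y x = (f x y)^*.
Hypothesis fpos : forall x, 0 <= f x x.

Lemma f0r x : f x 0 = 0.
Proof. by have := flin x 0 0 1; rewrite scaler0 addr0 mul1r => /eqP; rewrite -subr_eq0 opprD addrA subrr sub0r oppr_eq0 => /eqP. Qed.
Lemma fZr x y a : f x (a *: y) = a * f x y.
Proof. by have := flin x y 0 a; rewrite addr0 f0r addr0. Qed.
Lemma fDr x y z : f x (y + z) = f x y + f x z.
Proof. by have := flin x y z 1; rewrite scale1r mul1r. Qed.
Lemma fZl x y a : f (a *: x) y = a^* * f x y.
Proof. by rewrite (fsym y) fZr rmorphM /= -(fsym y x). Qed.
Lemma fDl x y z : f (x + y) z = f x z + f y z.
Proof. by rewrite (fsym z) fDr rmorphD /= -(fsym z x) -(fsym z y). Qed.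

Lemma fexp x y a : f (x + a *: y) (x + a *: y) =
  f x x + a * f x y + a^* * (f x y)^* + a^* * a * f y y.
Proof.
rewrite fDl !fDr !fZl !fZr -(fsym x y); ring.
Qed.

Lemma CS_sq x y : `|f x y| ^+ 2 <= f x x * f y y.
Proof.
set b := f x y; set X := f x x; set Y := f y y.
have hX : 0 <= X := fpos x.
have hY : 0 <= Y := fpos y.
have key : forall s, s \is Num.real -> 0 <= X - s *+ 2 * `|b| ^+ 2 + s ^+ 2 * `|b| ^+ 2 * Y.
  move=> s /CrealP sr; have := fpos (x + (- (b^* * s)) *: y); rewrite fexp.
  rewrite normCK.
  set t := _ + _ + _ + _; suff -> : t = X - s *+ 2 * (b * b^*) + s ^+ 2 * (b * b^*) * Y by [].
  rewrite /t !rmorphN /= !rmorphM /= conjCK sr; rewrite -/b -/X -/Y; ring.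
have nb0 : 0 <= `|b| ^+ 2 by rewrite exprn_ge0.
have [Y0|Ypos] := eqVneq Y 0.
  rewrite Y0 mulr0.
  have [n0|npos] := eqVneq (`|b| ^+ 2) 0; first by rewrite n0.
  have np : 0 < `|b| ^+ 2 by rewrite lt_def npos nb0.
  have hr : (X + 1) / (`|b| ^+ 2 *+ 2) \is Num.real.
    by apply: ger0_real; rewrite divr_ge0 // ?addr_ge0 ?ler01 // mulrn_wge0.
  have := key _ hr.
  rewrite Y0 mulr0 addr0.
  have -> : (X + 1) / (`|b| ^+ 2 *+ 2) *+ 2 * `|b| ^+ 2 = X + 1.
    by field; apply: contraNneq npos => ->; rewrite expr0n.
  by rewrite opprD addrA subrr sub0r oppr_ge0 ler10.
have Yp : 0 < Y by rewrite lt_def Ypos hY.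
have := key (Y^-1) (ger0_real (ltW (_ : 0 < Y^-1))); rewrite ?invr_gt0 //.
have -> : X - Y^-1 *+ 2 * `|b| ^+ 2 + Y^-1 ^+ 2 * `|b| ^+ 2 * Y = X - `|b| ^+ 2 / Y.
  field; by rewrite lt0r_neq0.
rewrite subr_ge0 ler_pdivrMr // mulrC; by move=> /(_ Yp).
Qed.
End CS.

Lemma CS_sqrt (C : numClosedFieldType) (V : lmodType C) (f : V -> V -> C) :
  (forall x y z a, f x (a *: y + z) = a * f x y + f x z) ->
  (forall x y, f y x = (f x y)^*) ->
  (forall x, 0 <= f x x) ->
  forall x y, `|f x y| <= sqrtC (f x x) * sqrtC (f y y).
Proof.
move=> h1 h2 h3 x y; have := CS_sq h1 h2 h3 x y.
rewrite -(@ler_sqrtC _ (`|f x y| ^+ 2)) ?qualifE /= ?exprn_ge0 ?mulr_ge0 //.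
by rewrite sqrCK // sqrtCM // qualifE /=.
Qed.

Section Forms.
Variable C : numClosedFieldType.
Definition Bf k n (P : 'M[C]_k) (x y : 'M[C]_(k, n)) := \tr (adjmx x *m P *m y).

Lemma Bf_lin k n (P : 'M[C]_k) (x y z : 'M[C]_(k, n)) a :
  Bf P x (a *: y + z) = a * Bf P x y + Bf P x z.
Proof. by rewrite /Bf mulmxDr -scalemxAr mxtraceD mxtraceZ. Qed.

Lemma Bf_sym k n (P : 'M[C]_k) (x y : 'M[C]_(k, n)) : adjmx P = P ->
  Bf P y x = (Bf P x y)^*.
Proof. by move=> hP; rewrite /Bf -adjmx_tr !adjmxM adjmxK hP mulmxA. Qed.

Lemma Bf_pos k n (P : 'M[C]_k) (x : 'M[C]_(k, n)) : psdmx P -> 0 <= Bf P x x.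
Proof.
move=> [_ hP]; rewrite /Bf /mxtrace; apply: sumr_ge0 => t _.
rewrite mulmx_entry row_mul.
have -> : row t (adjmx x) = adjmx (col t x) by apply/matrixP=> i j; rewrite !mxE.
exact: hP.
Qed.

Lemma Bf_CS k n (P : 'M[C]_k) (x y : 'M[C]_(k, n)) : psdmx P ->
  `|Bf P x y| <= sqrtC (Bf P x x) * sqrtC (Bf P y y).
Proof.
move=> hP; apply: (@CS_sqrt C [the lmodType C of 'M[C]_(k, n)] (Bf P)).
- exact: Bf_lin.
- by move=> ? ?; apply: Bf_sym; case: hP.
- by move=> ?; exact: Bf_pos.
Qed.
End Forms.

Lemma sum4_perm (C : numClosedFieldType) k m (F : 'I_k -> 'I_k -> 'I_m -> 'I_m -> C) :
  \sum_(a < k) \sum_(b < k) \sum_(c < m) \sum_(d < m) F a b c d =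
  \sum_(c < m) \sum_(d < m) \sum_(b < k) \sum_(a < k) F a b c d.
Proof.
rewrite exchange_big /=.
under eq_bigr => b _ do rewrite exchange_big /=.
rewrite exchange_big /=; apply: eq_bigr => c _.
under eq_bigr => b _ do rewrite exchange_big /=.
rewrite exchange_big /=; apply: eq_bigr => d _.
by rewrite exchange_big.
Qed.

Section Fq.
Variable C : numClosedFieldType.
Definition Fq k m (A : 'M[C]_(k, m)) (P : 'M[C]_k) (Z : 'M[C]_m) : C :=
  \sum_(r < k) \sum_(r' < k) \sum_(s < m) \sum_(s' < m)
     (A r s)^* * (P r r' * Z s s') * A r' s'.

Lemma Fq_tr k m (A : 'M[C]_(k, m)) P Z : Fq A P Z = \tr (adjmx A *m P *m A *m Z^T).
Proof.
rewrite /Fq sum4_perm /mxtrace; apply: eq_bigr => s _; rewrite mxE.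
apply: eq_bigr => s' _; rewrite !mxE big_distrl /=.
apply: eq_bigr => r' _; rewrite !mxE big_distrl big_distrl /=.
apply: eq_bigr => r _; rewrite !mxE; ring.
Qed.

Lemma FqDl k m (A : 'M[C]_(k, m)) P1 P2 Z : Fq A (P1 + P2) Z = Fq A P1 Z + Fq A P2 Z.
Proof. by rewrite !Fq_tr mulmxDr mulmxDl mulmxDl mxtraceD. Qed.
Lemma FqDr k m (A : 'M[C]_(k, m)) P Z1 Z2 : Fq A P (Z1 + Z2) = Fq A P Z1 + Fq A P Z2.
Proof. by rewrite !Fq_tr linearD /= mulmxDr mxtraceD. Qed.
Lemma FqNr k m (A : 'M[C]_(k, m)) P Z : Fq A P (- Z) = - Fq A P Z.
Proof. by rewrite !Fq_tr linearN /= mulmxN linearN. Qed.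
Lemma FqBr k m (A : 'M[C]_(k, m)) P Z1 Z2 : Fq A P (Z1 - Z2) = Fq A P Z1 - Fq A P Z2.
Proof. by rewrite FqDr FqNr. Qed.
Lemma FqZr k m (A : 'M[C]_(k, m)) P Z a : Fq A P (a *: Z) = a * Fq A P Z.
Proof. by rewrite !Fq_tr linearZ /= -scalemxAr mxtraceZ. Qed.

Lemma Fq_fact k m n (A : 'M[C]_(k, m)) P (Y Y' : 'M[C]_(n, m)) :
  Fq A P (adjmx Y *m Y') = Bf P (A *m Y^T) (A *m Y'^T).
Proof.
rewrite Fq_tr /Bf adjmxM trmx_mul.
have -> : adjmx (Y^T) = map_mx Num.conj Y by apply/matrixP=> i j; rewrite !mxE.
have -> : (adjmx Y)^T = map_mx Num.conj Y by apply/matrixP=> i j; rewrite !mxE.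
by rewrite !mulmxA mxtrace_mulC !mulmxA.
Qed.

Lemma Fq_pos k m (A : 'M[C]_(k, m)) P Z : psdmx P -> psdmx Z -> 0 <= Fq A P Z.
Proof.
move=> hP /psd_factor [Y <-]; rewrite Fq_fact; exact: Bf_pos.
Qed.
End Fq.

Section Inv.
Variable C : numClosedFieldType.

Lemma psd_quad p n (M : 'M[C]_n) (W : 'M[C]_(p, n)) i : psdmx M ->
  0 <= (W *m M *m adjmx W) i i.
Proof.
move=> [_ hpos]; have := hpos (col i (adjmx W)).
have -> : adjmx (col i (adjmx W)) = row i W by apply/matrixP=> a b; rewrite !mxE conjCK.
by rewrite -row_mul -mulmx_entry.
Qed.

Lemma diag_mulmx n (a b : 'rV[C]_n) :
  diag_mx a *m diag_mx b = diag_mx (\row_i (a 0 i * b 0 i)).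
Proof.
apply/matrixP=> i j; rewrite mul_diag_mx !mxE.
by have [->|ne] := eqVneq i j; rewrite ?mulr0n ?mulr0 // !mulr1n.
Qed.

Lemma psdmxD n (M N : 'M[C]_n) : psdmx M -> psdmx N -> psdmx (M + N).
Proof.
move=> [h1 p1] [h2 p2]; split; first by rewrite adjmxD h1 h2.
by move=> x; rewrite mulmxDr mulmxDl mxE addr_ge0.
Qed.

Lemma inv_spec n (T : 'M[C]_n) (d : C) : psdmx T -> 0 < d ->
  exists Sg : 'M[C]_n,
    adjmx Sg *m Sg *m (T + d%:M) = 1%:M /\ (T + d%:M) *m (adjmx Sg *m Sg) = 1%:M.
Proof.
move=> hT dp; set U := T + d%:M.
have hU : adjmx U = U.
  by rewrite /U adjmxD adjmx_scalar (proj1 hT); have /CrealP -> := ger0_real (ltW dp).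
have [V [l [h1 h2 E]]] := herm_spec hU.
have hl : forall i, 0 < l 0 i.
  move=> i; have : (V *m U *m adjmx V) i i = l 0 i.
    by rewrite E !mulmxA h2 mul1mx -mulmxA h2 mulmx1 mxE eqxx mulr1n.
  move=> <-; have hq := psd_quad V i hT; move: hq; set t := (V *m T *m adjmx V) => hq; rewrite /U mulmxDr mulmxDl mul_mx_scalar -scalemxAl h2 -/t !mxE eqxx mulr1n mulr1.
  rewrite !mxE in hq; exact: ltr_wpDl hq dp.
pose li := \row_i (sqrtC ((l 0 i)^-1)).
exists (diag_mx li *m V).
have Sd : adjmx (diag_mx li *m V) *m (diag_mx li *m V) = adjmx V *m diag_mx (\row_i ((l 0 i)^-1)) *m V.
  rewrite adjmxM adjmx_diag -!mulmxA; congr (_ *m _); rewrite !mulmxA; congr (_ *m _).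
  rewrite diag_mulmx; congr diag_mx; apply/rowP=> i; rewrite !mxE.
  have li0 : 0 <= (l 0 i)^-1 by rewrite invr_ge0 ltW.
  by have /CrealP -> := sqrtC_real li0; rewrite -expr2 sqrtCK.
have dinv : diag_mx (\row_i ((l 0 i)^-1)) *m diag_mx l = 1%:M.
  rewrite diag_mulmx -diag_const_mx; congr diag_mx; apply/rowP=> i; rewrite !mxE mulVf //.
  by rewrite lt0r_neq0.
have dinv' : diag_mx l *m diag_mx (\row_i ((l 0 i)^-1)) = 1%:M.
  rewrite diag_mulmx -diag_const_mx; congr diag_mx; apply/rowP=> i; rewrite !mxE mulfV //.
  by rewrite lt0r_neq0.
rewrite Sd E; split.
- by rewrite !mulmxA -[_ *m V *m adjmx V]mulmxA h2 mulmx1 -[_ *m diag_mx l]mulmxA dinv mulmx1 h1.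
- by rewrite !mulmxA -[_ *m V *m adjmx V]mulmxA h2 mulmx1 -[_ *m diag_mx _]mulmxA dinv' mulmx1 h1.
Qed.
End Inv.

Section Schur.
Variable C : numClosedFieldType.

Lemma psdmx_scalar n (d : C) : 0 <= d -> psdmx (d%:M : 'M[C]_n).
Proof.
move=> d0; split; first by rewrite adjmx_scalar; have /CrealP -> := ger0_real d0.
move=> x; rewrite mul_mx_scalar -scalemxAl mxE mxE; apply: mulr_ge0 => //.
by apply: sumr_ge0 => j _; rewrite !mxE mulrC mul_conjC_ge0.
Qed.

Lemma BfDP k n (P1 P2 : 'M[C]_k) (x y : 'M[C]_(k, n)) : Bf (P1 + P2) x y = Bf P1 x y + Bf P2 x y.
Proof. by rewrite /Bf mulmxDr mulmxDl mxtraceD. Qed.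

Lemma tr1 (M : 'M[C]_1) : \tr M = M 0 0.
Proof. by rewrite /mxtrace big_ord1. Qed.

Lemma schur_psd n (Q Q' Sg : 'M[C]_n) (d : C) : psdmx Q -> psdmx Q' -> 0 < d ->
  adjmx Sg *m Sg *m (Q + Q' + d%:M) = 1%:M ->
  psdmx (Q - Q *m (adjmx Sg *m Sg) *m Q).
Proof.
move=> hQ hQ' dp hSU; set S := adjmx Sg *m Sg in hSU *.
have hS : adjmx S = S by rewrite /S adjmxM adjmxK.
have hQa := proj1 hQ.
split; first by rewrite adjmxB !adjmxM adjmxK hQa !mulmxA.
move=> x; set U := Q + Q' + d%:M in hSU.
have hU : psdmx U by rewrite /U; apply: psdmxD; [apply: psdmxD|apply: psdmx_scalar; apply: ltW].
set u := S *m Q *m x.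
set s := Bf Q x u.
have e1 : (adjmx x *m (Q - Q *m S *m Q) *m x) 0 0 = Bf Q x x - s.
  by rewrite /s /u /Bf !tr1 mulmxBr mulmxBl !mulmxA [LHS]mxE [X in _ + X]mxE.
rewrite e1.
have e2 : Bf U u u = s.
  have hSU' : forall B : 'M[C]_(n, 1), adjmx Sg *m (Sg *m (U *m B)) = B.
    by move=> B; rewrite !mulmxA hSU mul1mx.
  by rewrite /s /u /Bf !adjmxM adjmxK hQa -!mulmxA hSU'.
have s0 : 0 <= s by rewrite -e2; apply: Bf_pos.
have e3 : Bf Q u u <= s.
  rewrite -e2 /U !BfDP -addrA lerDl; apply: addr_ge0; apply: Bf_pos => //.
  by apply: psdmx_scalar; apply: ltW.
have cs := CS_sq (@Bf_lin _ _ _ Q) (fun a b => Bf_sym a b hQa) (fun a => Bf_pos a hQ) x u.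
rewrite -/s ger0_norm // in cs.
have hX : 0 <= Bf Q x x by apply: Bf_pos.
rewrite subr_ge0.
have [->|sn0] := eqVneq s 0; first by [].
have sp : 0 < s by rewrite lt_def sn0 s0.
have : s * s <= Bf Q x x * s.
  by rewrite -expr2; apply: (le_trans cs); apply: ler_wpM2l.
by rewrite ler_pM2r.
Qed.
End Schur.
Section MinR.
Variable C : numClosedFieldType.
Implicit Types x y z : C.
Lemma minC_cases x y : Num.min x y = x \/ Num.min x y = y.
Proof. rewrite /Num.min /Order.min; case: (x < y); by [left|right]. Qed.
Lemma le_minC z x y : z <= x -> z <= y -> z <= Num.min x y.
Proof. by move=> h1 h2; case: (minC_cases x y) => ->. Qed.
Lemma minC_lel x y : x \is Num.real -> y \is Num.real -> Num.min x y <= x.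
Proof.
move=> xr yr; rewrite /Num.min /Order.min; case: ifP => // /negbT.
by rewrite real_ltNge // negbK.
Qed.
Lemma minC_ler x y : x \is Num.real -> y \is Num.real -> Num.min x y <= y.
Proof.
move=> xr yr; rewrite /Num.min /Order.min; case: ifP => // /ltW //.
Qed.
End MinR.

Lemma ix_sum (V : zmodType) (f : 'I_4 -> V) : f 0 + f 1 = f 2 + f 3 ->
  forall b, \sum_(i < 2) f (ix b i) = f 0 + f 1.
Proof.
move=> h b; rewrite big_ord_recl big_ord1 /ix.
case: b; last first.
  by congr (f _ + f _); apply/val_inj; rewrite /= inordK.
by rewrite h; congr (f _ + f _); apply/val_inj; rewrite /= inordK.
Qed.

Lemma ix_pair (V : zmodType) (f : 'I_4 -> V) : f 0 + f 1 = f 2 + f 3 ->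
  forall b j, exists j', f (ix b j) + f j' = f 0 + f 1.
Proof.
move=> h b j; have := ix_sum h b; rewrite big_ord_recl big_ord1.
case: j => [[|[|//]]] p.
  by move=> <-; exists (ix b (lift ord0 ord0)); congr (f (ix b _) + _); apply/val_inj.
by move=> <-; exists (ix b ord0); rewrite addrC; congr (_ + f (ix b _)); apply/val_inj.
Qed.

Section Rep.
Variable C : numClosedFieldType.
Variables (k m : nat) (P : 'I_4 -> 'M[C]_k) (Q : 'I_4 -> 'M[C]_m) (A : 'M[C]_(k, m)).
Hypotheses (hP : MkV_pos P) (hQ : MkV_pos Q).

Let R := P 0 + P 1.
Let T := Q 0 + Q 1.
Let q' := \matrix_(i, j) Fq A (P i) (Q j).

Lemma Fq0r P0 : Fq A P0 0 = 0.
Proof. by rewrite Fq_tr trmx0 mulmx0 mxtrace0. Qed.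
Lemma Fq0l Z : Fq A 0 Z = 0.
Proof. by rewrite Fq_tr mulmx0 mul0mx mul0mx mxtrace0. Qed.
Lemma Fq_sumr P0 (F : 'I_2 -> 'M[C]_m) : Fq A P0 (\sum_i F i) = \sum_i Fq A P0 (F i).
Proof. exact: (big_morph _ (FqDr A P0) (Fq0r P0)). Qed.
Lemma Fq_suml Z (F : 'I_2 -> 'M[C]_k) : Fq A (\sum_i F i) Z = \sum_i Fq A (F i) Z.
Proof. exact: (big_morph (fun X => Fq A X Z) (fun X Y => FqDl A X Y Z) (Fq0l Z)). Qed.

Lemma psdR : psdmx R. Proof. by apply: psdmxD; apply: (proj1 hP). Qed.
Lemma psdT : psdmx T. Proof. by apply: psdmxD; apply: (proj1 hQ). Qed.

Lemma sumP b : \sum_(i < 2) P (ix b i) = R.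
Proof. exact: ix_sum (proj2 hP) b. Qed.
Lemma sumQ b : \sum_(i < 2) Q (ix b i) = T.
Proof. exact: ix_sum (proj2 hQ) b. Qed.

Lemma LHS_eq d : \sum_(i < 2) \sum_(j < 2) q' (ix d i) (ix d j) = Fq A R T.
Proof.
under eq_bigr => i _ do under eq_bigr => j _ do rewrite mxE.
under eq_bigr => i _ do rewrite -Fq_sumr sumQ.
by rewrite -Fq_suml sumP.
Qed.

Lemma q'_ge0 i j : 0 <= q' i j.
Proof. by rewrite mxE; apply: Fq_pos; [apply: (proj1 hP)|apply: (proj1 hQ)]. Qed.

Variables (dl : C) (Sg : 'M[C]_m).
Hypotheses (dlp : 0 < dl) (hSU : adjmx Sg *m Sg *m (T + dl%:M) = 1%:M)
  (hUS : (T + dl%:M) *m (adjmx Sg *m Sg) = 1%:M).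
Let S := adjmx Sg *m Sg.

Lemma term_bound a c j l :
  `|Fq A R (Q (ix a j) *m S *m Q (ix c l))| <= Sac q' a c j l.
Proof.
set Z := Q (ix a j); set Z' := Q (ix c l).
have hZ : psdmx Z by apply: (proj1 hQ).
have hZ' : psdmx Z' by apply: (proj1 hQ).
set eta := A *m (Sg *m Z)^T; set eta' := A *m (Sg *m Z')^T.
have key : forall (X : 'M[C]_k) (W : 'M[C]_m), psdmx X -> W \in [:: Z; Z'] ->
    Bf X (A *m (Sg *m W)^T) (A *m (Sg *m W)^T) <= Fq A X W.
  move=> X W hX; rewrite !inE => /orP[] /eqP ->.
  - rewrite -Fq_fact -subr_ge0 -FqBr adjmxM (proj1 hZ) mulmxA.
    apply: Fq_pos => //.
    have [j' hj'] := ix_pair (proj2 hQ) a j.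
    have hU : adjmx Sg *m Sg *m (Z + Q j' + dl%:M) = 1%:M by rewrite hj'.
    by have := schur_psd hZ (proj1 hQ j') dlp hU; rewrite !mulmxA.
  - rewrite -Fq_fact -subr_ge0 -FqBr adjmxM (proj1 hZ') mulmxA.
    apply: Fq_pos => //.
    have [j' hj'] := ix_pair (proj2 hQ) c l.
    have hU : adjmx Sg *m Sg *m (Z' + Q j' + dl%:M) = 1%:M by rewrite hj'.
    by have := schur_psd hZ' (proj1 hQ j') dlp hU; rewrite !mulmxA.
have fb : forall b, `|Fq A R (Z *m S *m Z')| <=
    \sum_(i < 2) sqrtC (q' (ix b i) (ix a j)) * sqrtC (q' (ix b i) (ix c l)).
  move=> b.
  have -> : Fq A R (Z *m S *m Z') = \sum_(i < 2) Bf (P (ix b i)) eta eta'.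
    rewrite -(sumP b) Fq_suml; apply: eq_bigr => i _.
    by rewrite /eta /eta' -Fq_fact adjmxM (proj1 hZ) /S !mulmxA.
  apply: (le_trans (ler_norm_sum _ _ _)); apply: ler_sum => i _.
  have hPi : psdmx (P (ix b i)) by apply: (proj1 hP).
  apply: (le_trans (Bf_CS _ _ hPi)).
  apply: ler_pM; rewrite ?sqrtC_ge0 ?Bf_pos //; rewrite ler_sqrtC ?qualifE /= ?Bf_pos ?q'_ge0 //.
  - by rewrite mxE; apply: key; rewrite ?inE ?eqxx.
  - by rewrite mxE; apply: key; rewrite ?inE ?eqxx ?orbT.
by rewrite /Sac /=; apply: le_minC; apply: fb.
Qed.

Lemma TST : T *m S *m T = T - dl%:M + (dl ^+ 2) *: S.
Proof.
have eT : T = (T + dl%:M) - dl%:M by rewrite addrK.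
rewrite {1}eT mulmxBl hUS mul_scalar_mx [in LHS]eT mulmxBr !mulmxBl mul1mx -scalemxAl hSU !mul_mx_scalar scalerA.
apply/matrixP => i j; rewrite !mxE; ring.
Qed.

Lemma sum_bound a c : Fq A R T - dl * Fq A R 1%:M <= \sum_(j < 2) \sum_(l < 2) Sac q' a c j l.
Proof.
have hS0 : 0 <= Fq A R S by rewrite /S Fq_fact; apply: Bf_pos; apply: psdR.
have e1 : Fq A R (T *m S *m T) = Fq A R T - dl * Fq A R 1%:M + dl ^+ 2 * Fq A R S.
  by rewrite TST FqDr FqBr FqZr -(scalemx1 m dl) FqZr.
have h0 : 0 <= Fq A R (T *m S *m T).
  have -> : T *m S *m T = adjmx (Sg *m T) *m (Sg *m T).
    by rewrite adjmxM (proj1 psdT) /S !mulmxA.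
  by rewrite Fq_fact; apply: Bf_pos; apply: psdR.
apply: (@le_trans _ _ (Fq A R (T *m S *m T))).
  by rewrite e1 lerDl; apply: mulr_ge0 => //; apply: exprn_ge0; apply: ltW.
rewrite -(ger0_norm h0).
have -> : T *m S *m T = \sum_(j < 2) \sum_(l < 2) Q (ix a j) *m S *m Q (ix c l).
  rewrite -{1}(sumQ a) -(sumQ c) mulmx_suml mulmx_suml; apply: eq_bigr => j _.
  by rewrite mulmx_sumr.
rewrite Fq_sumr; apply: (le_trans (ler_norm_sum _ _ _)); apply: ler_sum => j _.
rewrite Fq_sumr; apply: (le_trans (ler_norm_sum _ _ _)); apply: ler_sum => l _.
exact: term_bound.
Qed.
End Rep.

Lemma lim_le (C : numClosedFieldType) (L R K : C) : L \is Num.real -> R \is Num.real -> 0 <= K ->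
  (forall d, 0 < d -> d <= 1 -> L - d * K <= R) -> L <= R.
Proof.
move=> Lr Rr K0 h; rewrite real_leNgt //; apply/negP => hlt.
have ep : 0 < L - R by rewrite subr_gt0.
have K1 : 0 < K + 1 + (L - R) by rewrite addr_gt0 // ltr_wpDl // ltr01.
have dp : 0 < (L - R) / (K + 1 + (L - R)) by rewrite divr_gt0.
have d1 : (L - R) / (K + 1 + (L - R)) <= 1.
  by rewrite ler_pdivrMr // mul1r lerDr addr_ge0 // ler01.
have := h _ dp d1; rewrite lerBlDr -lerBlDl.
have : (L - R) / (K + 1 + (L - R)) * K < L - R.
  by rewrite mulrAC ltr_pdivrMr // -addrA mulrDr ltrDl // mulr_gt0 // addr_gt0 // ltr01.
move=> h1 h2; have := le_lt_trans h2 h1; by rewrite ltxx.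
Qed.

Lemma rep_main (C : numClosedFieldType) k m (P : 'I_4 -> 'M[C]_k) (Q : 'I_4 -> 'M[C]_m)
  (A : 'M[C]_(k, m)) : MkV_pos P -> MkV_pos Q -> forall d a c : bool,
  \sum_(i < 2) \sum_(j < 2) (\matrix_(i, j) Fq A (P i) (Q j)) (ix d i) (ix d j)
    <= \sum_(j < 2) \sum_(l < 2) Sac (\matrix_(i, j) Fq A (P i) (Q j)) a c j l.
Proof.
move=> hP hQ d a c; rewrite LHS_eq //.
have hT := psdT hQ.
have hR := psdR hP.
have [Sg1 [hSU1 hUS1]] := inv_spec hT (ltr01 : (0 : C) < 1).
have R0 : 0 <= \sum_(j < 2) \sum_(l < 2) Sac (\matrix_(i, j) Fq A (P i) (Q j)) a c j l.
  apply: sumr_ge0 => j _; apply: sumr_ge0 => l _.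
  exact: (le_trans (normr_ge0 _) (@term_bound _ _ _ P Q A hP hQ 1 Sg1 ltr01 hSU1 a c j l)).
apply: (@lim_le C _ _ (Fq A (P 0 + P 1) 1%:M) (ger0_real (Fq_pos A hR hT)) (ger0_real R0) (Fq_pos A hR (@psdmx_scalar C m 1 ler01))) => dl dlp _.
have [Sg [hSU hUS]] := inv_spec hT dlp.
exact: (@sum_bound _ _ _ P Q A hP hQ dl Sg dlp hSU hUS a c).
Qed.

Section Final.
Variable C : numClosedFieldType.

Lemma sqrtCD_le (x e : C) : 0 <= x -> 0 <= e -> sqrtC (x + e) <= sqrtC x + sqrtC e.
Proof.
move=> x0 e0.
have s0 : 0 <= sqrtC x + sqrtC e by rewrite addr_ge0 // sqrtC_ge0.
rewrite -(sqrCK s0) ler_sqrtC ?qualifE /= ?addr_ge0 ?exprn_ge0 //.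
rewrite sqrrD !sqrtCK lerD2r lerDl mulrn_wge0 // mulr_ge0 // sqrtC_ge0 //.
Qed.

Lemma g_bound (x y e : C) : 0 <= x -> 0 <= y -> 0 <= e ->
  sqrtC (x + e) * sqrtC (y + e) <= sqrtC x * sqrtC y + sqrtC e * (sqrtC x + sqrtC y) + e.
Proof.
move=> x0 y0 e0.
have hx : 0 <= sqrtC (x + e) by rewrite sqrtC_ge0 addr_ge0.
have hy : 0 <= sqrtC (y + e) by rewrite sqrtC_ge0 addr_ge0.
have := ler_pM hx hy (sqrtCD_le x0 e0) (sqrtCD_le y0 e0).
suff -> : (sqrtC x + sqrtC e) * (sqrtC y + sqrtC e) =
   sqrtC x * sqrtC y + sqrtC e * (sqrtC x + sqrtC y) + e by [].
by rewrite -[X in _ = _ + X](sqrtCK e); ring.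
Qed.

Lemma min_bound (x y x' y' t : C) : x' \is Num.real -> y' \is Num.real ->
  x' <= x + t -> y' <= y + t -> Num.min x' y' <= Num.min x y + t.
Proof.
move=> xr yr h1 h2; case: (minC_cases x y) => ->.
- exact: le_trans (minC_lel xr yr) h1.
- exact: le_trans (minC_ler xr yr) h2.
Qed.

Definition Nq (q : 'M[C]_4) a c j l :=
  \sum_(b : bool) \sum_(i < 2) (sqrtC (q (ix b i) (ix a j)) + sqrtC (q (ix b i) (ix c l))).

Lemma Sac_bound (q : 'M[C]_4) e : (forall i j, 0 <= q i j) -> 0 <= e -> forall a c j l,
  Sac (q + const_mx e) a c j l <= Sac q a c j l + (sqrtC e * Nq q a c j l + e *+ 2).
Proof.
move=> q0 e0 a c j l.
have gb : forall b, \sum_(i < 2) sqrtC ((q + const_mx e) (ix b i) (ix a j)) *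
                                  sqrtC ((q + const_mx e) (ix b i) (ix c l)) <=
   \sum_(i < 2) sqrtC (q (ix b i) (ix a j)) * sqrtC (q (ix b i) (ix c l))
     + (sqrtC e * Nq q a c j l + e *+ 2).
  move=> b.
  have Nb : \sum_(i < 2) (sqrtC (q (ix b i) (ix a j)) + sqrtC (q (ix b i) (ix c l))) <= Nq q a c j l.
    rewrite /Nq big_bool /=; case: b; [rewrite lerDl|rewrite lerDr];
      by apply: sumr_ge0 => i _; rewrite addr_ge0 // sqrtC_ge0.
  apply: (le_trans (y := \sum_(i < 2) (sqrtC (q (ix b i) (ix a j)) * sqrtC (q (ix b i) (ix c l))
         + sqrtC e * (sqrtC (q (ix b i) (ix a j)) + sqrtC (q (ix b i) (ix c l))) + e))).
    by apply: ler_sum => i _; rewrite !mxE; apply: g_bound.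
  rewrite big_split big_split /= -mulr_sumr sumr_const card_ord -addrA lerD2l lerD2r.
  by apply: ler_wpM2l => //; rewrite sqrtC_ge0.
have realg : forall (r : 'M[C]_4) b, (forall i j, 0 <= r i j) ->
    \sum_(i < 2) sqrtC (r (ix b i) (ix a j)) * sqrtC (r (ix b i) (ix c l)) \is Num.real.
  move=> r b r0; apply: ger0_real; apply: sumr_ge0 => i _; apply: mulr_ge0; rewrite sqrtC_ge0 //.
have qe0 : forall i j, 0 <= (q + const_mx e) i j by move=> i0 j0; rewrite !mxE addr_ge0.
by rewrite /Sac /=; apply: min_bound; [apply: realg|apply: realg|apply: gb|apply: gb].
Qed.

Lemma Sac_ge0 (q : 'M[C]_4) a c j l : (forall i j, 0 <= q i j) -> 0 <= Sac q a c j l.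
Proof.
move=> q0; rewrite /Sac /=; apply: le_minC; apply: sumr_ge0 => i _;
  by apply: mulr_ge0; rewrite sqrtC_ge0.
Qed.

End Final.

Unset Implicit Arguments.
Theorem theorem6p10 (C : numClosedFieldType) (q : 'M[C]_4) :
  maxpos q ->
  forall d a c : bool,
    \sum_(i < 2) \sum_(j < 2) q (ix d i) (ix d j)
      <= \sum_(j < 2) \sum_(k < 2) Sac q a c j k.
Proof.
move=> hq d a c.
have rep : forall e, 0 < e -> exists k m (P : 'I_4 -> 'M[C]_k) (Q : 'I_4 -> 'M[C]_m) (A : 'M[C]_(k, m)),
    [/\ MkV_pos P, MkV_pos Q & q + const_mx e = \matrix_(i, j) Fq A (P i) (Q j)].
  move=> e ep; have [k [m [P [Q [A [hP [hQ hE]]]]]]] := hq e ep.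
  exists k, m, P, Q, A; split => //; apply/matrixP => i j; rewrite hE mxE.
  by rewrite /Fq.
have qe0 : forall e, 0 < e -> forall i j, 0 <= (q + const_mx e) i j.
  move=> e ep i j; have [k [m [P [Q [A [hP hQ ->]]]]]] := rep e ep.
  by rewrite mxE; apply: Fq_pos; [apply: (proj1 hP)|apply: (proj1 hQ)].
have q0 : forall i j, 0 <= q i j.
  move=> i j.
  have qr : q i j \is Num.real.
    have := qe0 1 ltr01 i j; rewrite !mxE => /ger0_real h.
    by have := rpredB h (ger0_real ler01); rewrite addrK.
  have := @lim_le C 0 (q i j) 1 (ger0_real (lexx 0)) qr ler01.
  apply => dl dlp _; rewrite sub0r mulr1 -subr_ge0 opprK.
  by have := qe0 dl dlp i j; rewrite !mxE addrC.
set L := \sum_(i < 2) \sum_(j < 2) q (ix d i) (ix d j).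
set R := \sum_(j < 2) \sum_(k < 2) Sac q a c j k.
set K := \sum_(j < 2) \sum_(l < 2) (Nq q a c j l + 2%:R).
have L0 : 0 <= L by apply: sumr_ge0 => i _; apply: sumr_ge0 => j _.
have R0 : 0 <= R by apply: sumr_ge0 => i _; apply: sumr_ge0 => j _; apply: Sac_ge0.
have K0 : 0 <= K.
  apply: sumr_ge0 => i _; apply: sumr_ge0 => j _; rewrite addr_ge0 ?ler0n //.
  apply: sumr_ge0 => b _; apply: sumr_ge0 => i' _; rewrite addr_ge0 // sqrtC_ge0 //.
apply: (lim_le (ger0_real L0) (ger0_real R0) K0) => dl dlp dl1.
have ep : 0 < dl ^+ 2 by rewrite exprn_gt0.
have [k [m [P [Q [A [hP hQ hE]]]]]] := rep _ ep.
have h1 : L <= \sum_(i < 2) \sum_(j < 2) (q + const_mx (dl ^+ 2)) (ix d i) (ix d j).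
  apply: ler_sum => i _; apply: ler_sum => j _; rewrite !mxE lerDl ltW //.
have h2 := rep_main A hP hQ d a c; rewrite -hE in h2.
have h3 : \sum_(j < 2) \sum_(l < 2) Sac (q + const_mx (dl ^+ 2)) a c j l <=
    R + \sum_(j < 2) \sum_(l < 2) (sqrtC (dl ^+ 2) * Nq q a c j l + dl ^+ 2 *+ 2).
  rewrite /R -big_split; apply: ler_sum => j _; rewrite -big_split; apply: ler_sum => l _.
  by apply: Sac_bound => //; apply: ltW.
have h4 : \sum_(j < 2) \sum_(l < 2) (sqrtC (dl ^+ 2) * Nq q a c j l + dl ^+ 2 *+ 2) <= dl * K.
  rewrite /K mulr_sumr; apply: ler_sum => j _; rewrite mulr_sumr; apply: ler_sum => l _.
  rewrite sqrCK; last exact: ltW.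
  rewrite mulrDr lerD2l -mulr_natr; apply: ler_wpM2r; first exact: ler0n.
  by rewrite expr2 -[X in _ <= X](mulr1 dl); apply: ler_wpM2l => //; exact: ltW.
rewrite lerBlDr; apply: (le_trans h1); apply: (le_trans h2); apply: (le_trans h3).
by rewrite lerD2l.
Qed.
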